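(* Consider the hierarchical imitation learning setting and the algorithm hg-DAgger (hierarchically guided DAgger) with halving learners described in the context. Suppose the meta-controller class $\mathcal{M}$ and the subpolicy class $\Pi_{\mathrm{LO}}$ are finite and the expert is realizable: $\mu^\star\in\mathcal{M}$ and $\pi^\star_g\in\Pi_{\mathrm{LO}}$ for every $g\in\mathcal{G}$. Then the total cost incurred by the expert in hg-DAgger by round $T$ is at most $$T\,C^{I}_{\mathrm{FULL}} + \bigl(\log_2|\mathcal{M}| + |\mathcal{G}^\star|\log_2|\Pi_{\mathrm{LO}}|\bigr)\bigl(C^{L}_{\mathrm{HI}} + H_{\mathrm{HI}}\,C^{I}_{\mathrm{LO}}\bigr) + \bigl(|\mathcal{G}^\star|\log_2|\Pi_{\mathrm{LO}}|\bigr)\,C^{L}_{\mathrm{LO}},$$ where $\mathcal{G}^\star:=\mu^\star(\mathcal{S})\subseteq\mathcal{G}$ is the set of subgoals actually used by the expert.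
   Context: Setting. There is a state space $\mathcal{S}$, an action space $\mathcal{A}$ and a set of subgoals $\mathcal{G}$. A hierarchical policy consists of a meta-controller $\mu:\mathcal{S}\to\mathcal{G}$ and, for each $g\in\mathcal{G}$, a subpolicy $\pi_g$ which maps a state to an action together with a termination signal $\omega\in\{0,1\}$ (termination is treated as part of an augmented low-level action). An episode starts at a start state $s$; repeatedly, the meta-controller chooses $g=\mu(s)$, then $\pi_g$ is rolled out from $s$ until it signals termination, producing a low-level trajectory $\tau$ of state–action(–termination) pairs, and $s$ is set to the last state of $\tau$; an episode consists of at most $H_{\mathrm{HI}}$ such high-level steps. The high-level trajectory is $\tau_{\mathrm{HI}}=\{(s_h,g_h)\}_h$ and the full trajectory $\tau_{\mathrm{FULL}}$ is the concatenation of the low-level trajectories. The expert has a hierarchical policy $(\mu^\star,\{\pi^\star_g\}_{g\in\mathcal{G}})$. Expert operations and costs (each invocation costs the stated amount): $\mathrm{Inspect}_{\mathrm{FULL}}(\tau_{\mathrm{FULL}})$ returns Pass/Fail according to whether the overall task was accomplished, cost $C^{I}_{\mathrm{FULL}}$; $\mathrm{Label}_{\mathrm{HI}}(\tau_{\mathrm{HI}})$ returns the expert's subgoal $g^\star_h=\mu^\star(s_h)$ for every high-level state $s_h$, cost $C^{L}_{\mathrm{HI}}$; $\mathrm{Inspect}_{\mathrm{LO}}(\tau;g)$ returns Pass/Fail according to whether the low-level trajectory $\tau$ accomplished subgoal $g$, cost $C^{I}_{\mathrm{LO}}$; $\mathrm{Label}_{\mathrm{LO}}(\tau;g)$ returns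 the expert's labels $\pi^\star_g(s)$ for all states $s$ in $\tau$, cost $C^{L}_{\mathrm{LO}}$. The expert is consistent: a subpolicy execution that agrees with $\pi^\star_g$ on every visited state passes $\mathrm{Inspect}_{\mathrm{LO}}(\cdot;g)$, and an episode in which every high-level choice agrees with $\mu^\star$ and every low-level execution agrees with the corresponding $\pi^\star_g$ passes $\mathrm{Inspect}_{\mathrm{FULL}}$. Learners. $\mathcal{M}$ is a finite class of meta-controllers and $\Pi_{\mathrm{LO}}$ a finite class of subpolicies. The meta-controller and each subpolicy $\pi_g$ are learned by the halving algorithm: it maintains a version space (initially $\mathcal{M}$, resp. $\Pi_{\mathrm{LO}}$), predicts by majority vote of the version space, and upon receiving labeled data removes all policies inconsistent with the labels. hg-DAgger (interactive rounds, no behavioral-cloning warm start). In each round $t=1,\dots,T$: obtain a new environment instance with a start state; execute the current hierarchical policy, recording $(s_h,g_h,\tau_h)$ for each high-level step; call $\mathrm{Inspect}_{\mathrm{FULL}}$ on the full trajectory. If it returns Fail: call $\mathrm{Label}_{\mathrm{HI}}(\tau_{\mathrm{HI}})$ to obtain $g^\star_h$; then process $h=1,2,\dots$ in order as long as $g_h=g^\star_h$: call $\mathrm{Inspect}_{\mathrm{LO}}(\tau_h;g_h)$, and if it returns Fail, call $\mathrm{Label}_{\mathrm{LO}}(\tau_h;g_h)$, add these labels to the data of subgoal $g_h$ and stop processing; finally add the high-level labels $\{(s_h,g^\star_h)\}$ to the meta-controller data. At the end of the round, update all halving learners on their data. The total expert cost is the sum of costs of all operations invoked. *)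

(* Defs.v *)
From HB Require Import structures.
From mathcomp Require Import all_boot all_order all_algebra.
From mathcomp Require Import boolp reals exp.

Set Implicit Arguments.
Unset Strict Implicit.
Unset Printing Implicit Defensive.

Import Order.TTheory GRing.Theory Num.Theory.
Local Open Scope ring_scope.

Definition log2 (R : realType) (x : R) : R := ln x / ln 2.

(* A low-level trajectory: the visited states with the augmented action
   (action, termination bit) emitted there. *)
Notation traj S A := (seq (S * (A * bool)))%type.

(* At each state the
   subpolicy emits (a, w); the pair is recorded; if w = true the subpolicy
   terminates (the last state of the trajectory is the current state),
   otherwise the action is executed.  [n] is a cap on the number of
   low-level steps (needed to make the rollout a total function). *)
Fixpoint rollout (S : Type) (A : eqType) (step : S -> A -> S)
    (pi : S -> A * bool) (n : nat) (s : S) : traj S A * S :=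
  match n with
  | 0 => ([::], s)
  | n'.+1 =>
      let aw := pi s in
      if aw.2 then ([:: (s, aw)], s)
      else let r := rollout step pi n' (step s aw.1) in ((s, aw) :: r.1, r.2)
  end.

Fixpoint episode (S : Type) (A : eqType) (G : Type) (step : S -> A -> S)
    (stop : S -> bool) (HLO : nat) (mu : S -> G) (pis : G -> S -> A * bool)
    (h : nat) (s : S) : seq (S * G * traj S A) :=
  match h with
  | 0 => [::]
  | h'.+1 =>
      if stop s then [::]
      else
        let g := mu s in
        let r := rollout step (pis g) HLO s in
        (s, g, r.1) :: episode step stop HLO mu pis h' r.2
  end.

(* Majority (plurality) vote of the version space V of the class indexed by
   f : I -> S -> Y at state s: an element of the multiset of predictions with
   maximal multiplicity (y0 is only used if V is empty). *)
Definition majority (I : finType) (S : Type) (Y : eqType) (f : I -> S -> Y)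
    (V : {set I}) (y0 : Y) (s : S) : Y :=
  let ys := [seq f i s | i <- enum V] in
  foldr (fun y best => if (count_mem best ys < count_mem y ys)%N then y else best)
        (head y0 ys) ys.

Definition halve (I : finType) (S : Type) (Y : eqType) (f : I -> S -> Y)
    (V : {set I}) (data : seq (S * Y)) : {set I} :=
  [set i in V | all (fun p => f i p.1 == p.2) data].

(* Low-level processing after a failed full inspection: go through h = 1,2,..
   while g_h = g*_h, calling Inspect_LO; stop at the first failure, which is
   then labeled. *)
Fixpoint lo_process (S : Type) (A : eqType) (G : eqType)
    (inspLO : traj S A -> G -> bool) (mustar : S -> G)
    (recs : seq (S * G * traj S A)) : nat * option (G * traj S A) :=
  match recs with
  | [::] => (0%N, None)
  | x :: r =>
      if x.1.2 == mustar x.1.1 then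
        if inspLO x.2 x.1.2 then
          let p := lo_process inspLO mustar r in (p.1.+1, p.2)
        else (1%N, Some (x.1.2, x.2))
      else (0%N, None)
  end.

Section HgDagger.
Variables (R : realType) (S : Type) (A : eqType) (G : finType)
  (IM IP : finType) (mM : IM -> S -> G) (mP : IP -> S -> A * bool)
  (mustar : S -> G) (pistar : G -> S -> A * bool)
  (env : nat -> S -> A -> S) (s0 : nat -> S) (stop : nat -> S -> bool)
  (H_HI H_LO : nat)
  (inspFull : nat -> traj S A -> bool) (inspLO : nat -> traj S A -> G -> bool)
  (CIF CLH CIL CLL : R) (g0 : G) (a0 : A * bool).

Definition hg_state := ({set IM} * {ffun G -> {set IP}})%type.

Definition hg_round (t : nat) (st : hg_state) : hg_state * R :=
  let VM := st.1 in let VP := st.2 in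
  let mu := majority mM VM g0 in
  let pis := fun g => majority mP (VP g) a0 in
  let recs := episode (env t) (stop t) H_LO mu pis H_HI (s0 t) in
  if inspFull t (flatten [seq x.2 | x <- recs]) then (st, CIF)
  else
    let p := lo_process (inspLO t) mustar recs in
    let VM' := halve mM VM [seq (x.1.1, mustar x.1.1) | x <- recs] in
    let VP' := match p.2 with
               | None => VP
               | Some (g, tau) =>
                   [ffun g' => if g' == g
                               then halve mP (VP g') [seq (q.1, pistar g q.1) | q <- tau]
                               else VP g']
               end in
    ((VM', VP'),
     CIF + CLH + (p.1)%:R * CIL + (if p.2 is Some _ then CLL else 0)).

Fixpoint hg_run (T : nat) : hg_state * R :=
  match T with
  | 0 => ((setT, [ffun => setT]), 0)
  | T'.+1 =>
      let r := hg_run T' in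
      let r' := hg_round T'.+1 r.1 in
      (r'.1, r.2 + r'.2)
  end.

Definition hg_cost (T : nat) : R := (hg_run T).2.

End HgDagger.

Definition Gstar (S : Type) (G : finType) (mustar : S -> G) : {set G} :=
  [set g | `[< exists s, mustar s = g >]].

(* Main.v *)
Require Import Defs.
From HB Require Import structures.
From mathcomp Require Import all_boot all_order all_algebra.
From mathcomp Require Import boolp reals exp.
From mathcomp Require Import lra.
Import Order.TTheory GRing.Theory Num.Theory.
Local Open Scope ring_scope.

Lemma foldr_max (Y : eqType) (ys l : seq Y) (b : Y) :
  let r := foldr (fun y best => if (count_mem best ys < count_mem y ys)%N then y else best) b l in
  (count_mem b ys <= count_mem r ys)%N /\
  (forall y, y \in l -> (count_mem y ys <= count_mem r ys)%N).
Proof.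
elim: l => [|x l [IH1 IH2]] /=; first by split.
set r := foldr _ _ _ in IH1 IH2 *.
case: ltnP => H; split.
- by apply: leq_trans IH1 (ltnW H).
- move=> y; rewrite inE => /orP [/eqP->//|/IH2 h]. by apply: leq_trans h (ltnW H).
- by [].
- move=> y; rewrite inE => /orP [/eqP->//|/IH2 //].
Qed.

Lemma card_sep (I : finType) (V : {set I}) (P : pred I) :
  #|[set i in V | P i]| = count P (enum V).
Proof.
rewrite cardE -size_filter; apply: perm_size; apply: uniq_perm.
- exact: enum_uniq.
- by rewrite filter_uniq // enum_uniq.
- by move=> i; rewrite mem_enum mem_filter inE mem_enum andbC.
Qed.

Lemma majority_half (I : finType) (S : Type) (Y : eqType) (f : I -> S -> Y)
    (V : {set I}) (y0 : Y) (s : S) (y : Y) :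
  majority f V y0 s != y ->
  (2 * #|[set i in V | f i s == y]| <= #|V|)%N.
Proof.
rewrite /majority; set ys := [seq f i s | i <- enum V].
set m := foldr _ _ _ => Hm.
have Hc : #|[set i in V | f i s == y]| = count_mem y ys.
  by rewrite card_sep /ys count_map.
have Hle : (count_mem y ys <= count_mem m ys)%N.
  case Hy: (y \in ys); first by have [_ ->] := foldr_max _ ys ys (head y0 ys).
  by rewrite (count_memPn (negbT Hy)).
have Hsum : (count_mem m ys + count_mem y ys <= size ys)%N.
  rewrite -count_predUI.
  have -> : count (predI (pred1 m) (pred1 y)) ys = 0%N.
    apply/eqP; rewrite -leqn0 leqNgt -has_count; apply/hasPn => z _ /=.
    by apply/negP => /andP [/eqP -> /eqP Ez]; move/eqP: Hm; rewrite Ez.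
  by rewrite addn0 count_size.
rewrite Hc cardE -(size_map (fun i => f i s)) mul2n -addnn.
by apply: leq_trans Hsum; rewrite leq_add2r.
Qed.

Definition log2' (R : realType) := @log2 R.

Lemma log2_ge0 (R : realType) (a : nat) : (1 <= a)%N -> 0 <= log2 (a%:R : R).
Proof.
move=> h; rewrite /log2 divr_ge0 // ?ln_ge0 // ?ler1n // ltW // ln_gt0 // ltr1n.
Qed.

Lemma log2_le (R : realType) (a b : nat) : (1 <= a)%N -> (a <= b)%N ->
  log2 (a%:R : R) <= log2 (b%:R : R).
Proof.
move=> h1 h2; rewrite /log2 ler_pM2r ?invr_gt0 ?ln_gt0 ?ltr1n //.
rewrite ler_ln ?ler_nat // posrE ltr0n //; exact: leq_trans h2.
Qed.

Lemma log2_half (R : realType) (a b : nat) : (1 <= a)%N -> (2 * a <= b)%N ->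
  log2 (a%:R : R) + 1 <= log2 (b%:R : R).
Proof.
move=> h1 h2.
have l2 : 0 < ln (2 : R) by rewrite ln_gt0 // ltr1n.
have -> : log2 (a%:R : R) + 1 = log2 ((2 * a)%N%:R : R).
  rewrite /log2 natrM lnM ?posrE ?ltr0n // mulrDl divff ?gt_eqF // addrC //.
have := @log2_le R (2*a) b; apply; by rewrite // muln_gt0.
Qed.
Fixpoint InP {T : Type} (x : T) (l : seq T) : Prop :=
  if l is y :: r then y = x \/ InP x r else False.

Lemma all_InP {T : Type} (P : pred T) l x : all P l -> InP x l -> P x.
Proof. elim: l => //= y l IH /andP [Hy Hl] [<-//|]; exact: IH. Qed.

Lemma notall_InP {T : Type} (P : pred T) l : ~~ all P l -> exists x, InP x l /\ ~~ P x.
Proof.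
elim: l => //= y l IH; rewrite negb_and => /orP [h|/IH [x [h1 h2]]].
  by exists y; split => //; left.
by exists x; split => //; right.
Qed.

Lemma allT {T : Type} (P : pred T) l : (forall x, P x) -> all P l.
Proof. by move=> h; elim: l => //= y l ->; rewrite h. Qed.

Lemma InP_map {T U : Type} (f : T -> U) l x : InP x l -> InP (f x) (map f l).
Proof. elim: l => //= y l IH [->|h]; [by left|right; exact: IH]. Qed.

Lemma rollout_lab (S : Type) (A : eqType) (step : S -> A -> S) pi n s :
  all (fun q => q.2 == pi q.1) (rollout step pi n s).1.
Proof.
elim: n s => //= n IH s; case: (pi s).2 => /=; first by rewrite eqxx.
by rewrite eqxx IH.
Qed.

Lemma episode_good (S : Type) (A : eqType) (G : Type) step stop HLO
   (mu : S -> G) pis h s :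
  (forall x, InP x (episode (A:=A) step stop HLO mu pis h s) ->
     x.1.2 = mu x.1.1 /\ x.2 = (rollout step (pis x.1.2) HLO x.1.1).1) /\
  (size (episode step stop HLO mu pis h s) <= h)%N.
Proof.
elim: h s => [|h IH] s //=; case: (stop s) => //=.
have [IH1 IH2] := IH (rollout step (pis (mu s)) HLO s).2.
split => //; move=> x [<-//|]; exact: IH1.
Qed.

Section Lo.
Variables (S : Type) (A : eqType) (G : eqType)
    (insp : traj S A -> G -> bool) (ms : S -> G).

Lemma lo_size recs : ((lo_process insp ms recs).1 <= size recs)%N.
Proof.
elim: recs => //= x r IH; case: ifP => // _; case: ifP => //= _.
Qed.

Lemma lo_some recs g tau : (lo_process insp ms recs).2 = Some (g, tau) ->
  exists x, InP x recs /\ x.1.2 = ms x.1.1 /\ insp x.2 x.1.2 = false /\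
     g = x.1.2 /\ tau = x.2.
Proof.
elim: recs => //= x r IH; case: eqP => // E; case: ifP => /= I.
  by move/IH => [y [h1 h2]]; exists y; split => //; right.
by case=> <- <-; exists x; split; [left|].
Qed.

Lemma lo_none recs : (lo_process insp ms recs).2 = None ->
  all (fun x => (x.1.2 == ms x.1.1) && insp x.2 x.1.2) recs \/
  exists x, InP x recs /\ x.1.2 != ms x.1.1.
Proof.
elim: recs => //=; first by left.
move=> x r IH; case: eqP => E; last first.
  by move=> _; right; exists x; split; [left|apply/eqP].
case: ifP => //= I /IH [h|[y [h1 h2]]]; first by left; rewrite h.
by right; exists y; split => //; right.
Qed.
End Lo.

Lemma halve_sub (I : finType) (S : Type) (Y : eqType) (f : I -> S -> Y) (V : {set I}) data :
  halve f V data \subset V.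
Proof. by apply/subsetP => i; rewrite inE => /andP []. Qed.

Lemma halve_mem (I : finType) (S : Type) (Y : eqType) (f : I -> S -> Y) (V : {set I}) data i :
  i \in V -> all (fun p => f i p.1 == p.2) data -> i \in halve f V data.
Proof. by move=> h1 h2; rewrite inE h1. Qed.

Lemma halve_mistake (I : finType) (S : Type) (Y : eqType) (f : I -> S -> Y) (V : {set I}) data
   y0 s y :
  InP (s, y) data -> majority f V y0 s != y ->
  (2 * #|halve f V data| <= #|V|)%N.
Proof.
move=> hin hm; apply: (leq_trans _ (majority_half _ _ _ _ _ _ _ _ hm)); rewrite leq_mul2l /=.
apply: subset_leq_card; apply/subsetP => i.
rewrite !inE => /andP [-> hall] /=.
exact: (all_InP _ _ _ hall hin).
Qed.

Section Main.
Variables (R : realType) (S : Type) (A : eqType) (G : finType)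
  (IM IP : finType) (mM : IM -> S -> G) (mP : IP -> S -> A * bool)
  (mustar : S -> G) (pistar : G -> S -> A * bool)
  (env : nat -> S -> A -> S) (s0 : nat -> S) (stop : nat -> S -> bool)
  (H_HI H_LO : nat)
  (inspFull : nat -> seq (S * (A * bool)) -> bool)
  (inspLO : nat -> seq (S * (A * bool)) -> G -> bool)
  (CIF CLH CIL CLL : R) (g0 : G) (a0 : A * bool).

Hypotheses (hCIF : 0 <= CIF) (hCLH : 0 <= CLH) (hCIL : 0 <= CIL) (hCLL : 0 <= CLL).
Hypothesis lowcons : forall (t : nat) (pi : S -> A * bool) (s : S) (g : G),
      let tau := (rollout (env t) pi H_LO s).1 in
      all (fun q => q.2 == pistar g q.1) tau -> inspLO t tau g.
Hypothesis fullcons : forall (t : nat) (mu : S -> G) (pis : G -> S -> A * bool),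
      let recs := episode (env t) (stop t) H_LO mu pis H_HI (s0 t) in
      all (fun x => (x.1.2 == mustar x.1.1) && inspLO t x.2 x.1.2) recs ->
      inspFull t (flatten [seq x.2 | x <- recs]).

Definition Inv (st : hg_state G IM IP) :=
  (exists2 i, i \in st.1 & mM i = mustar) /\
  (forall g, exists2 i, i \in st.2 g & mP i = pistar g).

Definition PhiP (VP : {ffun G -> {set IP}}) : R :=
  \sum_(g in Gstar mustar) log2 (#|VP g|%:R : R).

Definition PhiM (VM : {set IM}) : R := log2 (#|VM|%:R : R).

Definition K := CLH + H_HI%:R * CIL.

Definition round := hg_round mM mP mustar pistar env s0 stop H_HI H_LO
   inspFull inspLO CIF CLH CIL CLL g0 a0.

Lemma card_pos (I : finType) (V : {set I}) (P : I -> Prop) :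
  (exists2 i, i \in V & P i) -> (1 <= #|V|)%N.
Proof. by case=> i hi _; apply/card_gt0P; exists i. Qed.

Lemma round_ok t st : Inv st ->
  Inv (round t st).1 /\
  (round t st).2 + K * (PhiM (round t st).1.1 + PhiP (round t st).1.2)
     + CLL * PhiP (round t st).1.2
  <= CIF + K * (PhiM st.1 + PhiP st.2) + CLL * PhiP st.2.
Proof.
case: st => VM VP [[iM iMV iME] HP] /=.
rewrite /round /hg_round /=.
set mu := majority mM VM g0.
set pis := fun g => majority mP (VP g) a0.
set recs := episode _ _ _ _ _ _ _.
case: ifP => hF.
  by split; [split; [exists iM|]|rewrite /= lerD2r].
have hnall : ~~ all (fun x => (x.1.2 == mustar x.1.1) && inspLO t x.2 x.1.2) recs.
  by apply/negP => /(fullcons t mu pis); rewrite hF.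
have [hgood hsize] := episode_good _ A _ (env t) (stop t) H_LO mu pis H_HI (s0 t).
rewrite -/recs in hgood hsize.
have hp1 := lo_size _ _ _ (inspLO t) mustar recs.
set p := lo_process _ _ _ in hp1 *.
set VM' := halve mM VM _.
have hVM'sub : VM' \subset VM by exact: halve_sub.
have iMV' : iM \in VM'.
  apply: halve_mem => //; rewrite all_map; apply: allT => x /=; by rewrite iME.
have VM'pos : (1 <= #|VM'|)%N by apply: (card_pos _ _ (fun _ => True)); by exists iM.
have VMle : PhiM VM' <= PhiM VM.
  by apply: log2_le => //; exact: subset_leq_card.
have hmist : (exists x, InP x recs /\ x.1.2 != mustar x.1.1) -> PhiM VM' + 1 <= PhiM VM.
  case=> x [hx hne]; apply: log2_half => //.
  apply: (@halve_mistake _ _ _ _ _ _ g0 x.1.1 (mustar x.1.1)).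
    exact: (InP_map (fun x => (x.1.1, mustar x.1.1)) _ _ hx).
  by have [h _] := hgood x hx; move: hne; rewrite h.
have hp1r : (p.1)%:R * CIL <= H_HI%:R * CIL.
  by apply: ler_wpM2r => //; rewrite ler_nat (leq_trans hp1 hsize).
case Hp2 : p.2 => [[g1 tau]|]; last first.
  have [hall|hex] := lo_none _ _ _ _ _ _ Hp2; first by rewrite hall in hnall.
  have := hmist hex; split; first by split => //; exists iM.
  rewrite /K /=. set a := PhiM VM' in VMle H *. set b := PhiM VM in VMle H *.
  set c := PhiP VP. have hk : 0 <= CLH + H_HI%:R * CIL by rewrite addr_ge0 // mulr_ge0.
  set k := CLH + H_HI%:R * CIL in hk *.
  have h1 : 0 <= k * (b - a - 1) by apply: mulr_ge0 => //; lra.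
  have h4 : CLH + p.1%:R * CIL <= k by rewrite /k; lra.
  lra.
have [x [hx [hxe [hxi [-> ->]]]]] := lo_some _ _ _ _ _ _ _ _ Hp2.
have [hmu htau] := hgood x hx.
set g := x.1.2 in hxe hxi htau *.
have hgstar : g \in Gstar mustar by rewrite inE; apply/asboolP; exists x.1.1.
set VP' := [ffun g' => _].
have hnl : ~~ all (fun q => q.2 == pistar g q.1) x.2.
  apply/negP => hl; move: hxi; rewrite htau in hl *.
  by rewrite (lowcons _ _ _ _ hl).
have [q [hq hqn]] := notall_InP _ _ hnl.
have hq2 : q.2 = pis g q.1.
  move: hq; rewrite htau => hq.
  by apply/eqP; exact: (all_InP _ _ _ (rollout_lab _ _ _ _ _ _) hq).
have [iP iPV iPE] := HP g.
have iPV' : iP \in VP' g.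
  rewrite ffunE eqxx; apply: halve_mem => //; rewrite all_map; apply: allT => y /=.
  by rewrite iPE.
have VPeq : forall g', g' != g -> VP' g' = VP g'.
  by move=> g' /negbTE hg; rewrite ffunE hg.
have VPg_pos : (1 <= #|VP' g|)%N by apply: (card_pos _ _ (fun _ => True)); by exists iP.
have VPg_half : log2 (#|VP' g|%:R : R) + 1 <= log2 (#|VP g|%:R : R).
  apply: log2_half => //; rewrite ffunE eqxx.
  apply: (@halve_mistake _ _ _ _ _ _ a0 q.1 (pistar g q.1)).
    exact: (InP_map (fun q => (q.1, pistar g q.1)) _ _ hq).
  by rewrite -[majority _ _ _ _]/(pis g q.1) -hq2.
have hPP : PhiP VP' + 1 <= PhiP VP.
  rewrite /PhiP (bigD1 g hgstar) [X in _ <= X](bigD1 g hgstar) /=.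
  have E : \sum_(g' in Gstar mustar | g' != g) log2 (#|VP' g'|%:R : R) =
           \sum_(g' in Gstar mustar | g' != g) log2 (#|VP g'|%:R : R).
    by apply: eq_bigr => g' /andP [_ hg]; rewrite VPeq.
  rewrite E; lra.
split.
  split; first by exists iM.
  move=> g'; case: (eqVneq g' g) => [->|hg]; first by exists iP.
  by rewrite VPeq.
rewrite /K /=. set a := PhiM VM' in VMle *. set b := PhiM VM in VMle *.
set c := PhiP VP' in hPP *. set d := PhiP VP in hPP *.
have hk : 0 <= CLH + H_HI%:R * CIL by rewrite addr_ge0 // mulr_ge0.
set k := CLH + H_HI%:R * CIL in hk *.
have h1 : 0 <= k * (b - a) by apply: mulr_ge0 => //; lra.
have h2 : 0 <= k * (d - c - 1) by apply: mulr_ge0 => //; lra.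
have h3 : 0 <= CLL * (d - c - 1) by apply: mulr_ge0 => //; lra.
have h4 : CLH + p.1%:R * CIL <= k by rewrite /k; lra.
lra.
Qed.

Hypothesis hM : exists i, mM i = mustar.
Hypothesis hP : forall g, exists i, mP i = pistar g.

Definition run T := hg_run mM mP mustar pistar env s0 stop H_HI H_LO
   inspFull inspLO CIF CLH CIL CLL g0 a0 T.

Definition st0 : hg_state G IM IP := (setT, [ffun => setT]).

Lemma run_ok T : Inv (run T).1 /\
  (run T).2 + K * (PhiM (run T).1.1 + PhiP (run T).1.2) + CLL * PhiP (run T).1.2
  <= T%:R * CIF + K * (PhiM st0.1 + PhiP st0.2) + CLL * PhiP st0.2.
Proof.
elim: T => [|T [IH1 IH2]].
  split; last by rewrite /= mul0r add0r.
  split; first by case: hM => i hi; exists i; rewrite ?inE.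
  by move=> g; case: (hP g) => i hi; exists i; rewrite ?ffunE ?inE.
have [R1 R2] := round_ok T.+1 _ IH1.
split; first exact: R1.
rewrite /run /= -/(run T) -/(round T.+1 (run T).1).
move: R2 IH2; rewrite -[T.+1]addn1 natrD mulrDl.
set x := (round _ _).2; set y := (run T).2.
set P1 := PhiM (round _ _).1.1; set P2 := PhiP (round _ _).1.2.
move=> R2 IH2; lra.
Qed.
End Main.

Theorem theorem1 (R : realType) (S : Type) (A : eqType) (G : finType)
  (IM IP : finType) (mM : IM -> S -> G) (mP : IP -> S -> A * bool)
  (mustar : S -> G) (pistar : G -> S -> A * bool)
  (env : nat -> S -> A -> S) (s0 : nat -> S) (stop : nat -> S -> bool)
  (H_HI H_LO : nat)
  (inspFull : nat -> seq (S * (A * bool)) -> bool)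
  (inspLO : nat -> seq (S * (A * bool)) -> G -> bool)
  (CIF CLH CIL CLL : R) (g0 : G) (a0 : A * bool) (T : nat) :
  injective mM -> injective mP ->
  (exists i, mM i = mustar) -> (forall g, exists i, mP i = pistar g) ->
  0 <= CIF -> 0 <= CLH -> 0 <= CIL -> 0 <= CLL ->
  (forall (t : nat) (pi : S -> A * bool) (s : S) (g : G),
      let tau := (rollout (env t) pi H_LO s).1 in
      all (fun q => q.2 == pistar g q.1) tau -> inspLO t tau g) ->
  (forall (t : nat) (mu : S -> G) (pis : G -> S -> A * bool),
      let recs := episode (env t) (stop t) H_LO mu pis H_HI (s0 t) in
      all (fun x => (x.1.2 == mustar x.1.1) && inspLO t x.2 x.1.2) recs ->
      inspFull t (flatten [seq x.2 | x <- recs])) ->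
  hg_cost mM mP mustar pistar env s0 stop H_HI H_LO inspFull inspLO
          CIF CLH CIL CLL g0 a0 T
  <= T%:R * CIF
     + (log2 (#|IM|%:R : R) + #|Gstar mustar|%:R * log2 (#|IP|%:R : R))
       * (CLH + H_HI%:R * CIL)
     + (#|Gstar mustar|%:R * log2 (#|IP|%:R : R)) * CLL.
Proof.
move=> _ _ hM hP hCIF hCLH hCIL hCLL lowcons fullcons.
have [[[iM iMV _] HP] H] := @run_ok R S A G IM IP mM mP mustar pistar env s0 stop
  H_HI H_LO inspFull inspLO CIF CLH CIL CLL g0 a0 hCLH hCIL hCLL lowcons fullcons hM hP T.
rewrite /run in H iMV HP; rewrite /hg_cost.
move: H.
have e0 : PhiM R IM (st0 G IM IP).1 = log2 (#|IM|%:R : R) by rewrite /PhiM /= cardsT.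
have e1 : PhiP R S G IP mustar (st0 G IM IP).2 = #|Gstar mustar|%:R * log2 (#|IP|%:R : R).
  rewrite /PhiP (eq_bigr (fun _ => log2 (#|IP|%:R : R))); last first.
    by move=> g _; rewrite /st0 /= ffunE cardsT.
  by rewrite sumr_const mulr_natl.
rewrite e0 e1.
set st := hg_run _ _ _ _ _ _ _ _ _ _ _ _ _ _ _ _ _ T in iMV HP *.
have p1 : 0 <= PhiM R IM st.1.1.
  by apply: log2_ge0; apply/card_gt0P; exists iM.
have p2 : 0 <= PhiP R S G IP mustar st.1.2.
  apply: sumr_ge0 => g _; case: (HP g) => i hi _; apply: log2_ge0.
  by apply/card_gt0P; exists i.
have hk : 0 <= K R H_HI CLH CIL by rewrite /K addr_ge0 // mulr_ge0.
set k := K R H_HI CLH CIL in hk *.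
set u := PhiM R IM st.1.1 in p1 *; set v := PhiP R S G IP mustar st.1.2 in p2 *.
have h1 : 0 <= k * (u + v) by rewrite mulr_ge0 // addr_ge0.
have h2 : 0 <= CLL * v by rewrite mulr_ge0.
rewrite /k /K; set l1 := log2 _; set l2 := log2 _; set n := _%:R.
move=> H; move: h1; rewrite /k /K -/n => h1; lra.
Qed.
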